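(* In a generalised differential Seely category, for all morphisms $f:X\to Y$ and $g:X\to Z$ of $\mathscr C$, $\mathrm D(\langle f,g\rangle)=\langle\mathrm D(f),\mathrm D(g)\rangle_X;\langle f,g\rangle^*\varphi^{-1}_{Y,Z}$, where $\langle\mathrm D(f),\mathrm D(g)\rangle_X:(X,\lambda(X))\to(X,\lambda(Y)\oplus\lambda(Z))$ is the pairing in the fibre $LS(\mathscr C)_X$.
   Context: Composition is diagrammatic; monoidal categories are strict. Setting: an LNL adjunction $\mathcal F\dashv\mathcal U$, $\mathcal F:\mathscr C\to\mathcal L$, between cartesian $(\mathscr C,\times,I)$ and symmetric monoidal $(\mathcal L,\otimes,1)$; $\mathcal U$ lax monoidal via $n_{A,B}$; $\mathcal F$ strong monoidal via isomorphisms $m_{X,Y}:\mathcal F(X)\otimes\mathcal F(Y)\to\mathcal F(X\times Y)$, $m_1$; unit $\eta$; $\mathbf c_X:=\mathcal F(\Delta_X);m_{X,X}^{-1}$, $\mathbf w_X:=\mathcal F(t_X);m_1^{-1}$. $LS(\mathscr C)$: objects $(X,A)$; morphisms $(f,u):(X,A)\to(Y,B)$ with $f:X\to Y$, $u:\mathcal F(X)\otimes A\to B$; composition $(f,u);(g,v)=(f;g,(\mathbf c_X\otimes\mathrm{id}_A);(\mathcal F(f)\otimes u);v)$; identity $(\mathrm{id}_X,\mathbf w_X\otimes\mathrm{id}_A)$; $\mathbf{ls}(f,u)=f$; fibre $LS(\mathscr C)_X$ = morphisms $(\mathrm{id}_X,u)$; reindexing along $h:X\to Y$: $h^*(Y,B)=(X,B)$,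 $h^*(\mathrm{id}_Y,v)=(\mathrm{id}_X,(\mathcal F(h)\otimes\mathrm{id}_B);v)$. When $\mathcal L$ has biproducts $\oplus$, each fibre has biproducts $(X,A)\oplus_X(X,B)=(X,A\oplus B)$ (pairing $\langle(\mathrm{id}_X,u),(\mathrm{id}_X,v)\rangle_X=(\mathrm{id}_X,\langle u,v\rangle)$, injections $\iota^X_i=(\mathrm{id}_X,\mathbf w_X\otimes\iota_i)$) and $LS(\mathscr C)$ has products $(X\times Y,A\oplus B)$ with projections $(\pi_i,\mathbf w_{X\times Y}\otimes\pi_i)$. GDSC: $\mathcal L$ additive (CMon-enriched, $\otimes$ bilinear) with finite products, and a functor $\mathcal T:\mathscr C\to LS(\mathscr C)$ with: (t.1) $\mathbf{ls}\circ\mathcal T=\mathrm{id}$, so $\mathcal T(X)=(X,\lambda(X))$, and $\varphi_{X,Y}:=\langle\mathcal T(\pi_1),\mathcal T(\pi_2)\rangle:\mathcal T(X\times Y)\to(X\times Y,\lambda(X)\oplus\lambda(Y))$ is an isomorphism (it is vertical); (t.2) $\mathcal T(\mathcal U(A))=(\mathcal U(A),A)$; (t.3) with $i^{X,Y}_2:=\iota^{X\times Y}_2;\varphi^{-1}_{X,Y}$, $⦃(f,u)⦄:=\langle\pi_1;f,(\eta_X\times\mathrm{id});n_{\mathcal F(X),A};\mathcal U(u)\rangle$, $W(f,u):=(⦃(f,u)⦄,(\mathcal F(\pi_1)\otimes\mathrm{id}_A);u)$: $W(f,u);i^{Y,\mathcal U(B)}_2=i^{X,\mathcal U(A)}_2;\mathcal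 T(⦃(f,u)⦄)$. Differential: for $f:X\to Y$ with $\mathcal T(f)=(f,u)$, $\mathrm D(f):=(\mathrm{id}_X,u):(X,\lambda(X))\to(X,\lambda(Y))$. *)

(* Defs.v *)
(* an elementary, self-contained
   formalisation of the categorical setting (one-sorted categories, so that
   the strictness of the monoidal structure is expressible as equalities of
   objects). Composition is written diagrammatically: [comp f g] = f;g. *)
Set Implicit Arguments.
Unset Strict Implicit.

Record Cat := {
  ob : Type; mor : Type;
  dom : mor -> ob; cod : mor -> ob;
  idm : ob -> mor;
  comp : mor -> mor -> mor;
  dom_idm : forall A, dom (idm A) = A;
  cod_idm : forall A, cod (idm A) = A;
  dom_comp : forall f g, cod f = dom g -> dom (comp f g) = dom f;
  cod_comp : forall f g, cod f = dom g -> cod (comp f g) = cod g;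
  comp_idl : forall f, comp (idm (dom f)) f = f;
  comp_idr : forall f, comp f (idm (cod f)) = f;
  comp_assoc : forall f g h, cod f = dom g -> cod g = dom h ->
      comp (comp f g) h = comp f (comp g h)
}.
Arguments dom {c} _. Arguments cod {c} _. Arguments idm {c} _.
Arguments comp {c} _ _.

Definition hom (C : Cat) (f : mor C) (A B : ob C) := dom f = A /\ cod f = B.

Record cartesian (C : Cat) := {
  prd : ob C -> ob C -> ob C;
  pr1 : ob C -> ob C -> mor C;
  pr2 : ob C -> ob C -> mor C;
  pairing : mor C -> mor C -> mor C;
  trm : ob C;
  bang : ob C -> mor C;
  pr1_hom : forall X Y, hom (pr1 X Y) (prd X Y) X;
  pr2_hom : forall X Y, hom (pr2 X Y) (prd X Y) Y;
  pairing_hom : forall f g, dom f = dom g ->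
      hom (pairing f g) (dom f) (prd (cod f) (cod g));
  pairing_pr1 : forall f g, dom f = dom g ->
      comp (pairing f g) (pr1 (cod f) (cod g)) = f;
  pairing_pr2 : forall f g, dom f = dom g ->
      comp (pairing f g) (pr2 (cod f) (cod g)) = g;
  pairing_eta : forall h X Y, cod h = prd X Y ->
      pairing (comp h (pr1 X Y)) (comp h (pr2 X Y)) = h;
  bang_hom : forall X, hom (bang X) X trm;
  bang_uniq : forall h, cod h = trm -> h = bang (dom h)
}.

Section CartDefs.
Variables (C : Cat) (K : cartesian C).
Definition diag (X : ob C) : mor C := pairing K (idm X) (idm X).
Definition prodm (f g : mor C) : mor C :=
  pairing K (comp (pr1 K (dom f) (dom g)) f) (comp (pr2 K (dom f) (dom g)) g).
Definition assocC (X Y Z : ob C) : mor C :=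
  pairing K (comp (pr1 K (prd K X Y) Z) (pr1 K X Y))
            (pairing K (comp (pr1 K (prd K X Y) Z) (pr2 K X Y)) (pr2 K (prd K X Y) Z)).
Definition swapC (X Y : ob C) : mor C := pairing K (pr2 K X Y) (pr1 K X Y).
End CartDefs.

Record addsmc (L : Cat) := {
  tns : ob L -> ob L -> ob L;
  tnsm : mor L -> mor L -> mor L;
  one : ob L;
  sym : ob L -> ob L -> mor L;
  tnsm_dom : forall f g, dom (tnsm f g) = tns (dom f) (dom g);
  tnsm_cod : forall f g, cod (tnsm f g) = tns (cod f) (cod g);
  tnsm_id : forall A B, tnsm (idm A) (idm B) = idm (tns A B);
  tnsm_comp : forall f f' g g', cod f = dom f' -> cod g = dom g' ->
      tnsm (comp f f') (comp g g') = comp (tnsm f g) (tnsm f' g');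
  tns_assoc : forall A B C, tns (tns A B) C = tns A (tns B C);
  tnsm_assoc : forall f g h, tnsm (tnsm f g) h = tnsm f (tnsm g h);
  tns_onel : forall A, tns one A = A;
  tns_oner : forall A, tns A one = A;
  tnsm_onel : forall f, tnsm (idm one) f = f;
  tnsm_oner : forall f, tnsm f (idm one) = f;
  sym_hom : forall A B, hom (sym A B) (tns A B) (tns B A);
  sym_nat : forall f g,
      comp (tnsm f g) (sym (cod f) (cod g)) = comp (sym (dom f) (dom g)) (tnsm g f);
  sym_inv : forall A B, comp (sym A B) (sym B A) = idm (tns A B);
  sym_hex : forall A B C,
      sym A (tns B C) = comp (tnsm (sym A B) (idm C)) (tnsm (idm B) (sym A C));
  zro : ob L -> ob L -> mor L;
  add : mor L -> mor L -> mor L;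
  zro_hom : forall A B, hom (zro A B) A B;
  add_hom : forall f g A B, hom f A B -> hom g A B -> hom (add f g) A B;
  addA : forall f g h A B, hom f A B -> hom g A B -> hom h A B ->
      add (add f g) h = add f (add g h);
  addC : forall f g A B, hom f A B -> hom g A B -> add f g = add g f;
  add0 : forall f A B, hom f A B -> add (zro A B) f = f;
  comp_addl : forall f g h A B C, hom f A B -> hom g A B -> hom h B C ->
      comp (add f g) h = add (comp f h) (comp g h);
  comp_addr : forall f g h A B C, hom f A B -> hom g B C -> hom h B C ->
      comp f (add g h) = add (comp f g) (comp f h);
  comp_zrol : forall h A B C, hom h B C -> comp (zro A B) h = zro A C;
  comp_zror : forall f A B C, hom f A B -> comp f (zro B C) = zro A C;
  tnsm_addl : forall f g h A B, hom f A B -> hom g A B ->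
      tnsm (add f g) h = add (tnsm f h) (tnsm g h);
  tnsm_addr : forall f g h A B, hom g A B -> hom h A B ->
      tnsm f (add g h) = add (tnsm f g) (tnsm f h);
  tnsm_zrol : forall A B h, tnsm (zro A B) h = zro (tns A (dom h)) (tns B (cod h));
  tnsm_zror : forall f A B, tnsm f (zro A B) = zro (tns (dom f) A) (tns (cod f) B);
  (* finite products (hence biproducts) *)
  bsum : ob L -> ob L -> ob L;
  bp1 : ob L -> ob L -> mor L;
  bp2 : ob L -> ob L -> mor L;
  bpair : mor L -> mor L -> mor L;
  zob : ob L;
  bp1_hom : forall A B, hom (bp1 A B) (bsum A B) A;
  bp2_hom : forall A B, hom (bp2 A B) (bsum A B) B;
  bpair_hom : forall u v, dom u = dom v ->
      hom (bpair u v) (dom u) (bsum (cod u) (cod v));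
  bpair_p1 : forall u v, dom u = dom v -> comp (bpair u v) (bp1 (cod u) (cod v)) = u;
  bpair_p2 : forall u v, dom u = dom v -> comp (bpair u v) (bp2 (cod u) (cod v)) = v;
  bpair_eta : forall h A B, cod h = bsum A B ->
      bpair (comp h (bp1 A B)) (comp h (bp2 A B)) = h;
  zob_term : forall h, cod h = zob -> h = zro (dom h) zob
}.

Definition inj1 (L : Cat) (M : addsmc L) (A B : ob L) : mor L :=
  bpair M (idm A) (zro M A B).
Definition inj2 (L : Cat) (M : addsmc L) (A B : ob L) : mor L :=
  bpair M (zro M B A) (idm B).

Record functor (C D : Cat) := {
  fob : ob C -> ob D;
  fmor : mor C -> mor D;
  fmor_dom : forall f, dom (fmor f) = fob (dom f);
  fmor_cod : forall f, cod (fmor f) = fob (cod f);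
  fmor_id : forall X, fmor (idm X) = idm (fob X);
  fmor_comp : forall f g, cod f = dom g -> fmor (comp f g) = comp (fmor f) (fmor g)
}.

Record lnl := {
  Cc : Cat; Cx : cartesian Cc;
  Lc : Cat; Lx : addsmc Lc;
  Ff : functor Cc Lc; Uf : functor Lc Cc;
  mm : ob Cc -> ob Cc -> mor Lc;
  mminv : ob Cc -> ob Cc -> mor Lc;
  m1 : mor Lc;
  m1inv : mor Lc;
  mm_hom : forall X Y, hom (mm X Y) (tns Lx (fob Ff X) (fob Ff Y)) (fob Ff (prd Cx X Y));
  mminv_hom : forall X Y, hom (mminv X Y) (fob Ff (prd Cx X Y)) (tns Lx (fob Ff X) (fob Ff Y));
  mm_iso1 : forall X Y, comp (mm X Y) (mminv X Y) = idm (tns Lx (fob Ff X) (fob Ff Y));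
  mm_iso2 : forall X Y, comp (mminv X Y) (mm X Y) = idm (fob Ff (prd Cx X Y));
  m1_hom : hom m1 (one Lx) (fob Ff (trm Cx));
  m1inv_hom : hom m1inv (fob Ff (trm Cx)) (one Lx);
  m1_iso1 : comp m1 m1inv = idm (one Lx);
  m1_iso2 : comp m1inv m1 = idm (fob Ff (trm Cx));
  mm_nat : forall f g,
      comp (tnsm Lx (fmor Ff f) (fmor Ff g)) (mm (cod f) (cod g))
      = comp (mm (dom f) (dom g)) (fmor Ff (prodm Cx f g));
  mm_assoc : forall X Y Z,
      comp (comp (tnsm Lx (mm X Y) (idm (fob Ff Z))) (mm (prd Cx X Y) Z))
           (fmor Ff (assocC Cx X Y Z))
      = comp (tnsm Lx (idm (fob Ff X)) (mm Y Z)) (mm X (prd Cx Y Z));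
  mm_unitl : forall X,
      comp (comp (tnsm Lx m1 (idm (fob Ff X))) (mm (trm Cx) X)) (fmor Ff (pr2 Cx (trm Cx) X))
      = idm (fob Ff X);
  mm_unitr : forall X,
      comp (comp (tnsm Lx (idm (fob Ff X)) m1) (mm X (trm Cx))) (fmor Ff (pr1 Cx X (trm Cx)))
      = idm (fob Ff X);
  mm_sym : forall X Y,
      comp (mm X Y) (fmor Ff (swapC Cx X Y)) = comp (sym Lx (fob Ff X) (fob Ff Y)) (mm Y X);
  eta : ob Cc -> mor Cc;
  eps : ob Lc -> mor Lc;
  eta_hom : forall X, hom (eta X) X (fob Uf (fob Ff X));
  eps_hom : forall A, hom (eps A) (fob Ff (fob Uf A)) A;
  eta_nat : forall f, comp f (eta (cod f)) = comp (eta (dom f)) (fmor Uf (fmor Ff f));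
  eps_nat : forall u, comp (fmor Ff (fmor Uf u)) (eps (cod u)) = comp (eps (dom u)) u;
  tri1 : forall X, comp (fmor Ff (eta X)) (eps (fob Ff X)) = idm (fob Ff X);
  tri2 : forall A, comp (eta (fob Uf A)) (fmor Uf (eps A)) = idm (fob Uf A)
}.

Arguments mm : clear implicits. Arguments mminv : clear implicits.
Arguments m1 : clear implicits. Arguments m1inv : clear implicits.
Arguments eta : clear implicits. Arguments eps : clear implicits.

Section LNLDefs.
Local Unset Implicit Arguments.
Variable L : lnl.
Notation F := (fob (Ff L)).
Notation Fm := (fmor (Ff L)).
Notation U := (fob (Uf L)).
Notation Um := (fmor (Uf L)).

(* lax monoidal structure of U induced by the (monoidal) adjunction:
   n_{A,B} = eta ; U(m^{-1} ; (eps (x) eps)) : UA x UB -> U(A (x) B) *)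
Definition nn (A B : ob (Lc L)) : mor (Cc L) :=
  comp (eta L (prd (Cx L) (U A) (U B)))
       (Um (comp (mminv L (U A) (U B)) (tnsm (Lx L) (eps L A) (eps L B)))).

Definition cmul (X : ob (Cc L)) : mor (Lc L) :=
  comp (Fm (diag (Cx L) X)) (mminv L X X).
Definition wk (X : ob (Cc L)) : mor (Lc L) :=
  comp (Fm (bang (Cx L) X)) (m1inv L).

(* LS(C): a morphism (X,A) -> (Y,B) is a pair (f,u) *)
Definition lsmor := (mor (Cc L) * mor (Lc L))%type.
Definition lshom (p : lsmor) (X : ob (Cc L)) (A : ob (Lc L)) (Y : ob (Cc L)) (B : ob (Lc L)) :=
  hom (fst p) X Y /\ hom (snd p) (tns (Lx L) (F X) A) B.
Definition lsid (X : ob (Cc L)) (A : ob (Lc L)) : lsmor :=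
  (idm X, tnsm (Lx L) (wk X) (idm A)).
(* composition of p : (X,A) -> (Y,B) with q; A is the fibre part of the source *)
Definition lscomp (A : ob (Lc L)) (p q : lsmor) : lsmor :=
  (comp (fst p) (fst q),
   comp (comp (tnsm (Lx L) (cmul (dom (fst p))) (idm A))
              (tnsm (Lx L) (Fm (fst p)) (snd p)))
        (snd q)).
Definition lspair (p q : lsmor) : lsmor :=
  (pairing (Cx L) (fst p) (fst q), bpair (Lx L) (snd p) (snd q)).
Definition fpair (X : ob (Cc L)) (p q : lsmor) : lsmor :=
  (idm X, bpair (Lx L) (snd p) (snd q)).
Definition finj2 (X : ob (Cc L)) (A B : ob (Lc L)) : lsmor :=
  (idm X, tnsm (Lx L) (wk X) (inj2 (Lx L) A B)).
(* reindexing h^* of a vertical morphism p over cod h, with fibre source B *)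
Definition reindex (h : mor (Cc L)) (B : ob (Lc L)) (p : lsmor) : lsmor :=
  (idm (dom h), comp (tnsm (Lx L) (Fm h) (idm B)) (snd p)).
Definition brk (X : ob (Cc L)) (A : ob (Lc L)) (f : mor (Cc L)) (u : mor (Lc L)) : mor (Cc L) :=
  pairing (Cx L) (comp (pr1 (Cx L) X (U A)) f)
    (comp (comp (prodm (Cx L) (eta L X) (idm (U A))) (nn (F X) A)) (Um u)).
Definition Wmor (X : ob (Cc L)) (A : ob (Lc L)) (f : mor (Cc L)) (u : mor (Lc L)) : lsmor :=
  (brk X A f u, comp (tnsm (Lx L) (Fm (pr1 (Cx L) X (U A))) (idm A)) u).
End LNLDefs.

(* Generalised differential Seely category structure on an LNL adjunction.
   T(X) = (X, lam X), T(f) = (f, tau f). *)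
Record gdsc (L : lnl) := {
  lam : ob (Cc L) -> ob (Lc L);
  tau : mor (Cc L) -> mor (Lc L);
  tau_hom : forall f, hom (tau f) (tns (Lx L) (fob (Ff L) (dom f)) (lam (dom f))) (lam (cod f));
  tau_id : forall X, tau (idm X) = snd (lsid L X (lam X));
  tau_comp : forall f g, cod f = dom g ->
      tau (comp f g) = snd (lscomp L (lam (dom f)) (f, tau f) (g, tau g));
  (* (t.1): phi_{X,Y} = <T pi1, T pi2> is an isomorphism, with inverse phiinv *)
  phiinv : ob (Cc L) -> ob (Cc L) -> lsmor L;
  phiinv_hom : forall X Y, lshom L (phiinv X Y) (prd (Cx L) X Y) (bsum (Lx L) (lam X) (lam Y))
                                     (prd (Cx L) X Y) (lam (prd (Cx L) X Y));
  phi_iso1 : forall X Y,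
      lscomp L (lam (prd (Cx L) X Y))
        (lspair L (pr1 (Cx L) X Y, tau (pr1 (Cx L) X Y)) (pr2 (Cx L) X Y, tau (pr2 (Cx L) X Y)))
        (phiinv X Y)
      = lsid L (prd (Cx L) X Y) (lam (prd (Cx L) X Y));
  phi_iso2 : forall X Y,
      lscomp L (bsum (Lx L) (lam X) (lam Y)) (phiinv X Y)
        (lspair L (pr1 (Cx L) X Y, tau (pr1 (Cx L) X Y)) (pr2 (Cx L) X Y, tau (pr2 (Cx L) X Y)))
      = lsid L (prd (Cx L) X Y) (bsum (Lx L) (lam X) (lam Y));
  lam_U : forall A, lam (fob (Uf L) A) = A;
  (* (t.3), with i_2^{X,Y} = iota^{X x Y}_2 ; phi^{-1}_{X,Y} *)
  t3 : forall (X : ob (Cc L)) (A : ob (Lc L)) (Y : ob (Cc L)) (B : ob (Lc L)) f u,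
      lshom L (f, u) X A Y B ->
      lscomp L A (Wmor L X A f u)
        (lscomp L (lam (fob (Uf L) B))
           (finj2 L (prd (Cx L) Y (fob (Uf L) B)) (lam Y) (lam (fob (Uf L) B)))
           (phiinv Y (fob (Uf L) B)))
      = lscomp L (lam (fob (Uf L) A))
          (lscomp L (lam (fob (Uf L) A))
             (finj2 L (prd (Cx L) X (fob (Uf L) A)) (lam X) (lam (fob (Uf L) A)))
             (phiinv X (fob (Uf L) A)))
          (brk L X A f u, tau (brk L X A f u))
}.

Definition Dmor (L : lnl) (G : gdsc L) (f : mor (Cc L)) : lsmor L :=
  (idm (dom f), tau G f).

(* Main.v *)
From Stdlib Require Import Setoid.
Require Import Defs.

Set Implicit Arguments.

Lemma hom_id (C : Cat) (A : ob C) : hom (idm A) A A.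
Proof. split; [apply dom_idm | apply cod_idm]. Qed.
Lemma hom_comp (C : Cat) (f g : mor C) A B D : hom f A B -> hom g B D -> hom (comp f g) A D.
Proof. intros [H1 H2] [H3 H4]. split.
  - rewrite dom_comp; congruence.
  - rewrite cod_comp; congruence. Qed.
Lemma cd (C : Cat) (f g : mor C) A B D : hom f A B -> hom g B D -> cod f = dom g.
Proof. intros [H1 H2] [H3 H4]. congruence. Qed.
Lemma idl (C : Cat) (f : mor C) A B : hom f A B -> comp (idm A) f = f.
Proof. intros [H1 H2]. subst. apply comp_idl. Qed.
Lemma idr (C : Cat) (f : mor C) A B : hom f A B -> comp f (idm B) = f.
Proof. intros [H1 H2]. subst. apply comp_idr. Qed.
Lemma hom_fmor (C D : Cat) (F : functor C D) f A B : hom f A B -> hom (fmor F f) (fob F A) (fob F B).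
Proof. intros [H1 H2]; split; [rewrite fmor_dom | rewrite fmor_cod]; congruence. Qed.
Lemma hom_tnsm (C : Cat) (M : addsmc C) f g A B A' B' : hom f A B -> hom g A' B' ->
  hom (tnsm M f g) (tns M A A') (tns M B B').
Proof. intros [H1 H2] [H3 H4]; split; [rewrite tnsm_dom | rewrite tnsm_cod]; congruence. Qed.
Lemma hom_pairing (C : Cat) (K : cartesian C) f g A B D : hom f A B -> hom g A D ->
  hom (pairing K f g) A (prd K B D).
Proof. intros [H1 H2] [H3 H4]. destruct (pairing_hom K (f:=f) (g:=g)) as [E1 E2]; [congruence|].
  split; congruence. Qed.
Lemma hom_bpair (C : Cat) (M : addsmc C) f g A B D : hom f A B -> hom g A D ->
  hom (bpair M f g) A (bsum M B D).
Proof. intros [H1 H2] [H3 H4]. destruct (bpair_hom M (u:=f) (v:=g)) as [E1 E2]; [congruence|].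
  split; congruence. Qed.
Lemma hom_diag (C : Cat) (K : cartesian C) X : hom (diag K X) X (prd K X X).
Proof. unfold diag. apply hom_pairing; apply hom_id. Qed.
Lemma hom_prodm (C : Cat) (K : cartesian C) f g A B A' B' : hom f A B -> hom g A' B' ->
  hom (prodm K f g) (prd K A A') (prd K B B').
Proof. intros Hf Hg. unfold prodm. destruct Hf as [Hf1 Hf2]; destruct Hg as [Hg1 Hg2].
  rewrite Hf1, Hg1. apply hom_pairing; eapply hom_comp; try apply pr1_hom; try apply pr2_hom; split; auto. Qed.

Create HintDb hom.
#[export] Hint Resolve hom_id hom_comp hom_fmor hom_tnsm hom_pairing hom_bpair hom_diag hom_prodm
  pr1_hom pr2_hom bang_hom bp1_hom bp2_hom zro_hom sym_hom
  mm_hom mminv_hom m1_hom m1inv_hom eta_hom eps_hom : hom.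

Lemma hom_cmul (L : lnl) X : hom (cmul L X) (fob (Ff L) X) (tns (Lx L) (fob (Ff L) X) (fob (Ff L) X)).
Proof. unfold cmul. eauto with hom. Qed.
Lemma hom_wk (L : lnl) X : hom (wk L X) (fob (Ff L) X) (one (Lx L)).
Proof. unfold wk. eauto with hom. Qed.
#[export] Hint Resolve hom_cmul hom_wk : hom.

Ltac side := first [ reflexivity | eapply cd; solve [eauto 40 with hom] | solve [eauto 40 with hom] ].

Set Implicit Arguments.

Lemma pairing_comp (C : Cat) (K : cartesian C) k f g A B D E :
  hom k E A -> hom f A B -> hom g A D ->
  comp k (pairing K f g) = pairing K (comp k f) (comp k g).
Proof.
  intros Hk Hf Hg.
  assert (Hp : hom (pairing K f g) A (prd K B D)) by eauto with hom.
  assert (Hc : cod (comp k (pairing K f g)) = prd K B D).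
  { destruct (hom_comp Hk Hp); auto. }
  rewrite <- (pairing_eta Hc).
  destruct Hf as [Hf1 Hf2]; destruct Hg as [Hg1 Hg2].
  rewrite !comp_assoc by side.
  subst B D.
  rewrite pairing_pr1, pairing_pr2 by congruence. reflexivity.
Qed.

Lemma pp1 (C : Cat) (K : cartesian C) f g A B D :
  hom f A B -> hom g A D -> comp (pairing K f g) (pr1 K B D) = f.
Proof. intros [? ?] [? ?]. subst. apply pairing_pr1. congruence. Qed.
Lemma pp2 (C : Cat) (K : cartesian C) f g A B D :
  hom f A B -> hom g A D -> comp (pairing K f g) (pr2 K B D) = g.
Proof. intros [? ?] [? ?]. subst. apply pairing_pr2. congruence. Qed.


Lemma pairing_prodm (C : Cat) (K : cartesian C) a b u v E A A' B B' :
  hom a E A -> hom b E A' -> hom u A B -> hom v A' B' ->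
  comp (pairing K a b) (prodm K u v) = pairing K (comp a u) (comp b v).
Proof.
  intros Ha Hb Hu Hv. unfold prodm.
  replace (dom u) with A by (destruct Hu; auto).
  replace (dom v) with A' by (destruct Hv; auto).
  erewrite (pairing_comp _ (A:=prd K A A') (B:=B) (D:=B') (E:=E)) by eauto with hom.
  rewrite <- !comp_assoc by side.
  rewrite (pp1 _ Ha Hb), (pp2 _ Ha Hb). reflexivity.
Qed.

Lemma pr_id (C : Cat) (K : cartesian C) Y Z : pairing K (pr1 K Y Z) (pr2 K Y Z) = idm (prd K Y Z).
Proof.
  assert (H : cod (idm (prd K Y Z)) = prd K Y Z) by apply cod_idm.
  rewrite <- (pairing_eta H).
  rewrite !(idl (B:=Y)) by eauto with hom. rewrite (idl (B:=Z)) by eauto with hom. reflexivity.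
Qed.

Lemma diag_nat1 (C : Cat) (K : cartesian C) h X W : hom h X W ->
  comp h (diag K W) = pairing K h h.
Proof. intros Hh. unfold diag. erewrite (pairing_comp _ (A:=W) (B:=W) (D:=W)) by eauto with hom.
  rewrite (idr Hh). reflexivity. Qed.
Lemma diag_nat2 (C : Cat) (K : cartesian C) h X W : hom h X W ->
  comp (diag K X) (prodm K h h) = pairing K h h.
Proof. intros Hh. unfold diag. erewrite (pairing_prodm _ (E:=X) (A:=X) (A':=X) (B:=W) (B':=W)) by eauto with hom.
  rewrite (idl Hh). reflexivity. Qed.

Lemma cart_counit (C : Cat) (K : cartesian C) X :
  comp (comp (diag K X) (prodm K (bang K X) (idm X))) (pr2 K (trm K) X) = idm X.
Proof.
  unfold diag. erewrite (pairing_prodm _ (E:=X) (A:=X) (A':=X) (B:=trm K) (B':=X)) by eauto with hom.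
  rewrite (idl (bang_hom K X)), (idl (hom_id _ X)).
  apply (pp2 _ (A:=X)); eauto with hom.
Qed.

Lemma cart_coassoc (C : Cat) (K : cartesian C) X :
  comp (comp (diag K X) (prodm K (diag K X) (idm X))) (assocC K X X X)
  = comp (diag K X) (prodm K (idm X) (diag K X)).
Proof.
  assert (Hd := hom_diag K X).
  unfold diag at 1 3. unfold diag at 2.
  erewrite (pairing_prodm _ (E:=X) (A:=X) (A':=X) (B:=prd K X X) (B':=X)) by eauto with hom.
  erewrite (pairing_prodm _ (E:=X) (A:=X) (A':=X) (B:=X) (B':=prd K X X)) by eauto with hom.
  fold (diag K X).
  rewrite (idl Hd), !(idl (hom_id _ X)).
  unfold assocC.
  assert (Hp : hom (pairing K (diag K X) (idm X)) X (prd K (prd K X X) X)) by eauto with hom.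
  erewrite (pairing_comp _ (A:=prd K (prd K X X) X) (B:=X) (D:=prd K X X)) by eauto 10 with hom.
  erewrite (pairing_comp _ (A:=prd K (prd K X X) X) (B:=X) (D:=X)) by eauto 10 with hom.
  rewrite <- !comp_assoc by side.
  assert (E1 : comp (pairing K (diag K X) (idm X)) (pr1 K (prd K X X) X) = diag K X)
    by (apply (pp1 _ (A:=X)); eauto with hom).
  assert (E2 : comp (pairing K (diag K X) (idm X)) (pr2 K (prd K X X) X) = idm X)
    by (apply (pp2 _ (A:=X)); eauto with hom).
  rewrite E1, E2. unfold diag.
  rewrite (pp1 _ (A:=X) (hom_id _ X) (hom_id _ X)), (pp2 _ (A:=X) (hom_id _ X) (hom_id _ X)). reflexivity.
Qed.

Lemma hom_assocC (C : Cat) (K : cartesian C) X Y Z :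
  hom (assocC K X Y Z) (prd K (prd K X Y) Z) (prd K X (prd K Y Z)).
Proof. unfold assocC. eauto 10 with hom. Qed.

Set Implicit Arguments.

Lemma iso_swap (C : Cat) (a b m m' mi mi' : mor C) A B A' B' :
  hom a A B -> hom b A' B' -> hom m A A' -> hom m' B B' -> hom mi A' A -> hom mi' B' B ->
  comp mi m = idm A' -> comp m' mi' = idm B -> comp a m' = comp m b ->
  comp b mi' = comp mi a.
Proof.
  intros Ha Hb Hm Hm' Hmi Hmi' E1 E2 E3.
  rewrite <- (idr Ha), <- E2, <- (comp_assoc (f:=a)), E3 by side.
  rewrite <- !comp_assoc, E1, (idl Hb) by side. reflexivity.
Qed.

Lemma w_nat (L : lnl) h X W : hom h X W ->
  comp (fmor (Ff L) h) (wk L W) = wk L X.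
Proof.
  intros Hh. unfold wk. rewrite <- comp_assoc, <- fmor_comp by side.
  assert (Hb := hom_comp Hh (bang_hom (Cx L) W)). destruct Hb as [Hb1 Hb2].
  rewrite (@bang_uniq _ (Cx L) (comp h (bang (Cx L) W)) Hb2), Hb1. reflexivity.
Qed.

Lemma c_nat (L : lnl) h X W : hom h X W ->
  comp (fmor (Ff L) h) (cmul L W) = comp (cmul L X) (tnsm (Lx L) (fmor (Ff L) h) (fmor (Ff L) h)).
Proof.
  intros Hh. unfold cmul.
  rewrite <- comp_assoc, <- fmor_comp by side.
  rewrite (diag_nat1 _ Hh), <- (diag_nat2 _ Hh), fmor_comp by side.
  rewrite !comp_assoc by side. f_equal.
  eapply (iso_swap (m := mm L X X) (m' := mm L W W)); eauto with hom; try apply mm_iso2; try apply mm_iso1.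
  destruct Hh as [Hd Hc].
  rewrite <- Hd, <- Hc. apply mm_nat.
Qed.

Lemma m1_step (L : lnl) X :
  comp (mminv L (trm (Cx L)) X) (tnsm (Lx L) (m1inv L) (idm (fob (Ff L) X)))
  = fmor (Ff L) (pr2 (Cx L) (trm (Cx L)) X).
Proof.
  assert (Hq : hom (tnsm (Lx L) (m1inv L) (idm (fob (Ff L) X)))
                   (tns (Lx L) (fob (Ff L) (trm (Cx L))) (fob (Ff L) X)) (fob (Ff L) X)).
  { pose proof (hom_tnsm (Lx L) (m1inv_hom L) (hom_id _ (fob (Ff L) X))) as H.
    rewrite tns_onel in H. exact H. }
  assert (Hp : hom (tnsm (Lx L) (m1 L) (idm (fob (Ff L) X)))
                   (fob (Ff L) X) (tns (Lx L) (fob (Ff L) (trm (Cx L))) (fob (Ff L) X))).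
  { pose proof (hom_tnsm (Lx L) (m1_hom L) (hom_id _ (fob (Ff L) X))) as H.
    rewrite tns_onel in H. exact H. }
  assert (Eqp : comp (tnsm (Lx L) (m1inv L) (idm (fob (Ff L) X))) (tnsm (Lx L) (m1 L) (idm (fob (Ff L) X)))
                = idm (tns (Lx L) (fob (Ff L) (trm (Cx L))) (fob (Ff L) X))).
  { rewrite <- tnsm_comp by side. rewrite m1_iso2, (idl (hom_id _ _)). apply tnsm_id. }
  pose proof (mm_unitl X) as U.
  transitivity (comp (mminv L (trm (Cx L)) X) (comp (tnsm (Lx L) (m1inv L) (idm (fob (Ff L) X)))
     (comp (comp (tnsm (Lx L) (m1 L) (idm (fob (Ff L) X))) (mm L (trm (Cx L)) X)) (fmor (Ff L) (pr2 (Cx L) (trm (Cx L)) X))))).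
  { rewrite U, (idr Hq). reflexivity. }
  rewrite <- !comp_assoc by side.
  rewrite (comp_assoc (f := mminv L (trm (Cx L)) X)) by side.
  rewrite Eqp, (idr (mminv_hom _ _)), mm_iso2.
  apply (idl (hom_fmor (Ff L) (pr2_hom (Cx L) _ _))).
Qed.

Lemma counit (L : lnl) X :
  comp (cmul L X) (tnsm (Lx L) (wk L X) (idm (fob (Ff L) X))) = idm (fob (Ff L) X).
Proof.
  unfold cmul, wk.
  assert (E1 : tnsm (Lx L) (comp (fmor (Ff L) (bang (Cx L) X)) (m1inv L)) (idm (fob (Ff L) X))
     = comp (tnsm (Lx L) (fmor (Ff L) (bang (Cx L) X)) (fmor (Ff L) (idm X)))
            (tnsm (Lx L) (m1inv L) (idm (fob (Ff L) X)))).
  { rewrite <- tnsm_comp by side. rewrite fmor_id, (idl (hom_id _ _)). reflexivity. }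
  assert (E2 : comp (mminv L X X) (tnsm (Lx L) (fmor (Ff L) (bang (Cx L) X)) (fmor (Ff L) (idm X)))
     = comp (fmor (Ff L) (prodm (Cx L) (bang (Cx L) X) (idm X))) (mminv L (trm (Cx L)) X)).
  { symmetry. eapply (iso_swap (m := mm L X X) (m' := mm L (trm (Cx L)) X)); eauto with hom;
      try apply mm_iso2; try apply mm_iso1.
    pose proof (mm_nat (bang (Cx L) X) (idm X)) as N.
    destruct (bang_hom (Cx L) X) as [B1 B2]. rewrite B1, B2, dom_idm, cod_idm in N. exact N. }
  rewrite E1.
  rewrite !comp_assoc by side.
  rewrite <- (comp_assoc (f := mminv L X X)) by side.
  rewrite E2.
  rewrite !comp_assoc by side.
  rewrite m1_step.
  rewrite <- !fmor_comp by side.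
  rewrite <- comp_assoc by side.
  rewrite cart_counit. apply fmor_id.
Qed.

Lemma assoc_step (L : lnl) X :
  comp (mminv L (prd (Cx L) X X) X) (tnsm (Lx L) (mminv L X X) (idm (fob (Ff L) X)))
  = comp (fmor (Ff L) (assocC (Cx L) X X X))
      (comp (mminv L X (prd (Cx L) X X)) (tnsm (Lx L) (idm (fob (Ff L) X)) (mminv L X X))).
Proof.
  pose proof (mm_assoc X X X) as MA.
  assert (Hui : hom (comp (mminv L (prd (Cx L) X X) X) (tnsm (Lx L) (mminv L X X) (idm (fob (Ff L) X))))
     (fob (Ff L) (prd (Cx L) (prd (Cx L) X X) X))
     (tns (Lx L) (fob (Ff L) X) (tns (Lx L) (fob (Ff L) X) (fob (Ff L) X)))).
  { rewrite <- tns_assoc. eauto with hom. }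
  assert (Hv : hom (comp (tnsm (Lx L) (idm (fob (Ff L) X)) (mm L X X)) (mm L X (prd (Cx L) X X)))
     (tns (Lx L) (fob (Ff L) X) (tns (Lx L) (fob (Ff L) X) (fob (Ff L) X)))
     (fob (Ff L) (prd (Cx L) X (prd (Cx L) X X)))).
  { eauto with hom. }
  assert (Hu : hom (comp (tnsm (Lx L) (mm L X X) (idm (fob (Ff L) X))) (mm L (prd (Cx L) X X) X))
     (tns (Lx L) (fob (Ff L) X) (tns (Lx L) (fob (Ff L) X) (fob (Ff L) X)))
     (fob (Ff L) (prd (Cx L) (prd (Cx L) X X) X))).
  { rewrite <- tns_assoc. eauto with hom. }
  assert (Hvi : hom (comp (mminv L X (prd (Cx L) X X)) (tnsm (Lx L) (idm (fob (Ff L) X)) (mminv L X X)))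
     (fob (Ff L) (prd (Cx L) X (prd (Cx L) X X)))
     (tns (Lx L) (fob (Ff L) X) (tns (Lx L) (fob (Ff L) X) (fob (Ff L) X)))).
  { eauto with hom. }
  assert (E1 : comp (comp (mminv L (prd (Cx L) X X) X) (tnsm (Lx L) (mminv L X X) (idm (fob (Ff L) X))))
                    (comp (tnsm (Lx L) (mm L X X) (idm (fob (Ff L) X))) (mm L (prd (Cx L) X X) X))
               = idm (fob (Ff L) (prd (Cx L) (prd (Cx L) X X) X))).
  { rewrite !comp_assoc by side.
    rewrite <- (comp_assoc (f := tnsm (Lx L) (mminv L X X) (idm (fob (Ff L) X)))) by side.
    rewrite <- tnsm_comp by side.
    rewrite mm_iso2, (idl (hom_id _ _)), tnsm_id.
    rewrite (idl (mm_hom _ _)). apply mm_iso2. }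
  assert (E2 : comp (comp (tnsm (Lx L) (idm (fob (Ff L) X)) (mm L X X)) (mm L X (prd (Cx L) X X)))
                    (comp (mminv L X (prd (Cx L) X X)) (tnsm (Lx L) (idm (fob (Ff L) X)) (mminv L X X)))
               = idm (tns (Lx L) (fob (Ff L) X) (tns (Lx L) (fob (Ff L) X) (fob (Ff L) X)))).
  { rewrite !comp_assoc by side.
    rewrite <- (comp_assoc (f := mm L X (prd (Cx L) X X))) by side.
    rewrite mm_iso1, (idl (hom_tnsm _ (hom_id _ _) (mminv_hom _ _))).
    rewrite <- tnsm_comp by side.
    rewrite mm_iso1, (idl (hom_id _ _)). apply tnsm_id. }
  rewrite <- (idr Hui), <- E2, <- MA.
  rewrite <- !comp_assoc by side.
  rewrite E1, (idl (hom_fmor _ (hom_assocC _ _ _ _))).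
  apply comp_assoc; side.
Qed.

Lemma coassoc (L : lnl) X :
  comp (cmul L X) (tnsm (Lx L) (idm (fob (Ff L) X)) (cmul L X))
  = comp (cmul L X) (tnsm (Lx L) (cmul L X) (idm (fob (Ff L) X))).
Proof.
  unfold cmul.
  assert (E1 : tnsm (Lx L) (idm (fob (Ff L) X)) (comp (fmor (Ff L) (diag (Cx L) X)) (mminv L X X))
     = comp (tnsm (Lx L) (fmor (Ff L) (idm X)) (fmor (Ff L) (diag (Cx L) X)))
            (tnsm (Lx L) (idm (fob (Ff L) X)) (mminv L X X))).
  { rewrite <- tnsm_comp by side. rewrite fmor_id, (idl (hom_id _ _)). reflexivity. }
  assert (E3 : tnsm (Lx L) (comp (fmor (Ff L) (diag (Cx L) X)) (mminv L X X)) (idm (fob (Ff L) X))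
     = comp (tnsm (Lx L) (fmor (Ff L) (diag (Cx L) X)) (fmor (Ff L) (idm X)))
            (tnsm (Lx L) (mminv L X X) (idm (fob (Ff L) X)))).
  { rewrite <- tnsm_comp by side. rewrite fmor_id, (idl (hom_id _ _)). reflexivity. }
  assert (E2 : comp (mminv L X X) (tnsm (Lx L) (fmor (Ff L) (idm X)) (fmor (Ff L) (diag (Cx L) X)))
     = comp (fmor (Ff L) (prodm (Cx L) (idm X) (diag (Cx L) X))) (mminv L X (prd (Cx L) X X))).
  { symmetry. eapply (iso_swap (m := mm L X X) (m' := mm L X (prd (Cx L) X X))); eauto with hom;
      try apply mm_iso2; try apply mm_iso1.
    pose proof (mm_nat (idm X) (diag (Cx L) X)) as N.
    destruct (hom_diag (Cx L) X) as [B1 B2]. rewrite B1, B2, dom_idm, cod_idm in N. exact N. }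
  assert (E4 : comp (mminv L X X) (tnsm (Lx L) (fmor (Ff L) (diag (Cx L) X)) (fmor (Ff L) (idm X)))
     = comp (fmor (Ff L) (prodm (Cx L) (diag (Cx L) X) (idm X))) (mminv L (prd (Cx L) X X) X)).
  { symmetry. eapply (iso_swap (m := mm L X X) (m' := mm L (prd (Cx L) X X) X)); eauto with hom;
      try apply mm_iso2; try apply mm_iso1.
    pose proof (mm_nat (diag (Cx L) X) (idm X)) as N.
    destruct (hom_diag (Cx L) X) as [B1 B2]. rewrite B1, B2, dom_idm, cod_idm in N. exact N. }
  rewrite E1, E3.
  rewrite !comp_assoc by side.
  rewrite <- (comp_assoc (f := mminv L X X)) by side.
  rewrite E2.
  rewrite <- (comp_assoc (f := mminv L X X)) by side.
  rewrite E4.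
  rewrite !comp_assoc by side.
  rewrite assoc_step.
  rewrite <- (comp_assoc (f := fmor (Ff L) (prodm (Cx L) (diag (Cx L) X) (idm X)))) by side.
  rewrite <- !(comp_assoc (f := fmor (Ff L) (diag (Cx L) X))) by side.
  rewrite <- !fmor_comp by side.
  rewrite <- comp_assoc by side.
  rewrite cart_coassoc.
  apply comp_assoc; side.
Qed.

Lemma bpair_comp (C : Cat) (M : addsmc C) k u v A B D E :
  hom k E A -> hom u A B -> hom v A D ->
  comp k (bpair M u v) = bpair M (comp k u) (comp k v).
Proof.
  intros Hk Hu Hv.
  assert (Hp : hom (bpair M u v) A (bsum M B D)) by eauto with hom.
  assert (Hc : cod (comp k (bpair M u v)) = bsum M B D).
  { destruct (hom_comp Hk Hp); auto. }
  rewrite <- (bpair_eta Hc).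
  destruct Hu as [Hu1 Hu2]; destruct Hv as [Hv1 Hv2].
  rewrite !comp_assoc by side.
  subst B D.
  rewrite bpair_p1, bpair_p2 by congruence. reflexivity.
Qed.

Lemma cd' (C : Cat) (f g : mor C) A B B' D : hom f A B -> hom g B' D -> B = B' -> cod f = dom g.
Proof. intros [H1 H2] [H3 H4] E. congruence. Qed.
Lemma hom_comp' (C : Cat) (f g : mor C) A B B' D : hom f A B -> hom g B' D -> B = B' -> hom (comp f g) A D.
Proof. intros Hf Hg E. subst. eapply hom_comp; eauto. Qed.
Lemma hom_conv (C : Cat) (f : mor C) A B A' B' : hom f A B -> A = A' -> B = B' -> hom f A' B'.
Proof. intros H E1 E2. subst. exact H. Qed.

Ltac onorm := repeat (rewrite tns_assoc || rewrite tns_onel || rewrite tns_oner); reflexivity.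

Create HintDb homn.
#[export] Hint Resolve hom_id hom_comp' hom_fmor hom_tnsm hom_pairing hom_bpair hom_diag hom_prodm
  pr1_hom pr2_hom bang_hom bp1_hom bp2_hom zro_hom sym_hom
  mm_hom mminv_hom m1_hom m1inv_hom eta_hom eps_hom hom_cmul hom_wk : homn.
#[export] Hint Extern 1 (@eq (ob _) _ _) => onorm : homn.

Ltac side2 := first [ reflexivity | eapply cd'; [solve [eauto 40 with homn] | solve [eauto 40 with homn] | onorm] ].

Lemma core (L : lnl) X W A P B1 B2 (h : mor (Cc L)) th p1 p2 s2 :
  hom h X W -> hom th (tns (Lx L) (fob (Ff L) X) A) P ->
  hom p1 (tns (Lx L) (fob (Ff L) W) P) B1 -> hom p2 (tns (Lx L) (fob (Ff L) W) P) B2 ->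
  hom s2 (tns (Lx L) (fob (Ff L) W) (bsum (Lx L) B1 B2)) P ->
  comp (comp (tnsm (Lx L) (cmul L W) (idm P)) (tnsm (Lx L) (idm (fob (Ff L) W)) (bpair (Lx L) p1 p2))) s2 = (tnsm (Lx L) (wk L W) (idm P)) ->
  th = comp (comp (tnsm (Lx L) (cmul L X) (idm A)) (tnsm (Lx L) (idm (fob (Ff L) X)) (bpair (Lx L) (comp (comp (tnsm (Lx L) (cmul L X) (idm A)) (tnsm (Lx L) (fmor (Ff L) h) th)) p1) (comp (comp (tnsm (Lx L) (cmul L X) (idm A)) (tnsm (Lx L) (fmor (Ff L) h) th)) p2))))
            (comp (tnsm (Lx L) (fmor (Ff L) h) (idm (bsum (Lx L) B1 B2))) s2).
Proof.
  intros Hh Hth Hp1 Hp2 Hs PE.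
  assert (HK : hom (comp (tnsm (Lx L) (cmul L X) (idm A)) (tnsm (Lx L) (fmor (Ff L) h) th)) (tns (Lx L) (fob (Ff L) X) A) (tns (Lx L) (fob (Ff L) W) P)) by eauto 20 with homn.
  assert (Hphi : hom (bpair (Lx L) p1 p2) (tns (Lx L) (fob (Ff L) W) P) (bsum (Lx L) B1 B2)) by eauto with hom.
  rewrite <- (bpair_comp (Lx L) HK Hp1 Hp2).
  assert (EC : comp (tnsm (Lx L) (idm (fob (Ff L) X)) (comp (comp (tnsm (Lx L) (cmul L X) (idm A)) (tnsm (Lx L) (fmor (Ff L) h) th)) (bpair (Lx L) p1 p2))) (tnsm (Lx L) (fmor (Ff L) h) (idm (bsum (Lx L) B1 B2))) = comp (tnsm (Lx L) (fmor (Ff L) h) (comp (tnsm (Lx L) (cmul L X) (idm A)) (tnsm (Lx L) (fmor (Ff L) h) th))) (tnsm (Lx L) (idm (fob (Ff L) W)) (bpair (Lx L) p1 p2))).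
  { rewrite <- (tnsm_comp _ (f := (idm (fob (Ff L) X)))) by side2.
    rewrite <- (tnsm_comp _ (f := (fmor (Ff L) h)) (f' := (idm (fob (Ff L) W)))) by side2.
    rewrite (idl (hom_fmor (Ff L) Hh)), (idr (hom_fmor (Ff L) Hh)), (idr (hom_comp HK Hphi)). reflexivity. }
  assert (EQ1 : comp (tnsm (Lx L) (cmul L X) (idm A)) (tnsm (Lx L) (tnsm (Lx L) (idm (fob (Ff L) X)) (cmul L X)) (idm A)) = comp (tnsm (Lx L) (cmul L X) (idm A)) (tnsm (Lx L) (cmul L X) (idm (tns (Lx L) (fob (Ff L) X) A)))).
  { rewrite <- (tnsm_id (Lx L) (fob (Ff L) X) A).
    rewrite <- (tnsm_assoc (Lx L) (cmul L X) (idm (fob (Ff L) X)) (idm A)).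
    rewrite <- (tnsm_comp _ (f := (cmul L X)) (f' := tnsm (Lx L) (idm (fob (Ff L) X)) (cmul L X))) by side2.
    rewrite <- (tnsm_comp _ (f := (cmul L X)) (f' := tnsm (Lx L) (cmul L X) (idm (fob (Ff L) X)))) by side2.
    rewrite coassoc. reflexivity. }
  assert (ED : comp (tnsm (Lx L) (cmul L X) (idm A)) (tnsm (Lx L) (fmor (Ff L) h) (comp (tnsm (Lx L) (cmul L X) (idm A)) (tnsm (Lx L) (fmor (Ff L) h) th))) = comp (comp (tnsm (Lx L) (cmul L X) (idm A)) (tnsm (Lx L) (fmor (Ff L) h) th)) (tnsm (Lx L) (cmul L W) (idm P))).
  { transitivity (comp (tnsm (Lx L) (cmul L X) (idm A)) (comp (tnsm (Lx L) (cmul L X) (idm (tns (Lx L) (fob (Ff L) X) A))) (tnsm (Lx L) (tnsm (Lx L) (fmor (Ff L) h) (fmor (Ff L) h)) th))).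
    - assert (EK1 : tnsm (Lx L) (fmor (Ff L) h) (comp (tnsm (Lx L) (cmul L X) (idm A)) (tnsm (Lx L) (fmor (Ff L) h) th)) = comp (tnsm (Lx L) (idm (fob (Ff L) X)) (tnsm (Lx L) (cmul L X) (idm A))) (tnsm (Lx L) (fmor (Ff L) h) (tnsm (Lx L) (fmor (Ff L) h) th))).
      { rewrite <- (tnsm_comp _ (f := (idm (fob (Ff L) X))) (f' := (fmor (Ff L) h))) by side2.
        rewrite (idl (hom_fmor (Ff L) Hh)). reflexivity. }
      rewrite EK1.
      rewrite <- (tnsm_assoc (Lx L) (idm (fob (Ff L) X)) (cmul L X) (idm A)).
      rewrite <- (tnsm_assoc (Lx L) (fmor (Ff L) h) (fmor (Ff L) h) th).
      rewrite <- (comp_assoc (f := tnsm (Lx L) (cmul L X) (idm A))) by side2.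
      rewrite EQ1.
      apply comp_assoc; side2.
    - rewrite (comp_assoc (f := tnsm (Lx L) (cmul L X) (idm A)) (g := tnsm (Lx L) (fmor (Ff L) h) th)) by side2.
      rewrite <- (tnsm_comp _ (f := (fmor (Ff L) h)) (f' := (cmul L W))) by side2.
      rewrite (c_nat _ Hh), (idr Hth).
      f_equal.
      rewrite <- (tnsm_comp _ (f := (cmul L X)) (f' := tnsm (Lx L) (fmor (Ff L) h) (fmor (Ff L) h))) by side2.
      rewrite (idl Hth). reflexivity. }
  assert (EF : comp (comp (tnsm (Lx L) (cmul L X) (idm A)) (tnsm (Lx L) (fmor (Ff L) h) th)) (tnsm (Lx L) (wk L W) (idm P)) = th).
  { rewrite (comp_assoc (f := tnsm (Lx L) (cmul L X) (idm A)) (g := tnsm (Lx L) (fmor (Ff L) h) th)) by side2.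
    rewrite <- (tnsm_comp _ (f := (fmor (Ff L) h)) (f' := (wk L W))) by side2.
    rewrite (w_nat _ Hh), (idr Hth).
    assert (E5 : tnsm (Lx L) (wk L X) th = comp (tnsm (Lx L) (wk L X) (idm (tns (Lx L) (fob (Ff L) X) A))) th).
    { transitivity (comp (tnsm (Lx L) (wk L X) (idm (tns (Lx L) (fob (Ff L) X) A))) (tnsm (Lx L) (idm (one (Lx L))) th)).
      - rewrite <- (tnsm_comp _ (f := (wk L X)) (f' := idm (one (Lx L)))) by side2.
        rewrite (idr (hom_wk L X)), (idl Hth). reflexivity.
      - rewrite tnsm_onel. reflexivity. }
    rewrite E5.
    rewrite <- (tnsm_id (Lx L) (fob (Ff L) X) A).
    rewrite <- (tnsm_assoc (Lx L) (wk L X) (idm (fob (Ff L) X)) (idm A)).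
    rewrite <- (comp_assoc (f := tnsm (Lx L) (cmul L X) (idm A))) by side2.
    rewrite <- (tnsm_comp _ (f := (cmul L X)) (f' := tnsm (Lx L) (wk L X) (idm (fob (Ff L) X)))) by side2.
    rewrite counit, (idl (hom_id _ A)), tnsm_id.
    apply (idl Hth). }
  rewrite (comp_assoc (f := tnsm (Lx L) (cmul L X) (idm A)) (g := tnsm (Lx L) (idm (fob (Ff L) X)) (comp (comp (tnsm (Lx L) (cmul L X) (idm A)) (tnsm (Lx L) (fmor (Ff L) h) th)) (bpair (Lx L) p1 p2)))) by side2.
  rewrite <- (comp_assoc (f := tnsm (Lx L) (idm (fob (Ff L) X)) (comp (comp (tnsm (Lx L) (cmul L X) (idm A)) (tnsm (Lx L) (fmor (Ff L) h) th)) (bpair (Lx L) p1 p2)))) by side2.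
  rewrite EC.
  rewrite (comp_assoc (f := tnsm (Lx L) (fmor (Ff L) h) (comp (tnsm (Lx L) (cmul L X) (idm A)) (tnsm (Lx L) (fmor (Ff L) h) th)))) by side2.
  rewrite <- (comp_assoc (f := tnsm (Lx L) (cmul L X) (idm A)) (g := tnsm (Lx L) (fmor (Ff L) h) (comp (tnsm (Lx L) (cmul L X) (idm A)) (tnsm (Lx L) (fmor (Ff L) h) th)))) by side2.
  rewrite ED.
  rewrite (comp_assoc (f := (comp (tnsm (Lx L) (cmul L X) (idm A)) (tnsm (Lx L) (fmor (Ff L) h) th))) (g := tnsm (Lx L) (cmul L W) (idm P))) by side2.
  rewrite <- (comp_assoc (f := tnsm (Lx L) (cmul L W) (idm P))) by side2.
  rewrite PE, EF. reflexivity.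
Qed.

Unset Implicit Arguments.

Theorem proposition4p14 (L : lnl) (G : gdsc L) (f g : mor (Cc L)) :
  dom f = dom g ->
  Dmor G (pairing (Cx L) f g)
  = lscomp L (lam G (dom f))
      (fpair L (dom f) (Dmor G f) (Dmor G g))
      (reindex L (pairing (Cx L) f g) (bsum (Lx L) (lam G (cod f)) (lam G (cod g)))
         (phiinv G (cod f) (cod g))).
Proof.
  intros Hfg.
  assert (Hf : hom f (dom f) (cod f)) by (split; reflexivity).
  assert (Hg : hom g (dom f) (cod g)) by (split; [symmetry; exact Hfg | reflexivity]).
  assert (Hh := hom_pairing (Cx L) Hf Hg).
  assert (Htf := tau_hom G f). assert (Htg := tau_hom G g). rewrite <- Hfg in Htg.
  assert (Hth := tau_hom G (pairing (Cx L) f g)).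
  destruct Hh as [Hh1 Hh2]. rewrite Hh1, Hh2 in Hth.
  assert (Hh : hom (pairing (Cx L) f g) (dom f) (prd (Cx L) (cod f) (cod g))) by (split; assumption).
  assert (Hp1 := tau_hom G (pr1 (Cx L) (cod f) (cod g))).
  assert (Hp2 := tau_hom G (pr2 (Cx L) (cod f) (cod g))).
  destruct (pr1_hom (Cx L) (cod f) (cod g)) as [E1 E2]. rewrite E1, E2 in Hp1.
  destruct (pr2_hom (Cx L) (cod f) (cod g)) as [E3 E4]. rewrite E3, E4 in Hp2.
  destruct (phiinv_hom G (cod f) (cod g)) as [_ Hpsi].
  pose proof (pp1 (Cx L) Hf Hg) as Ef.
  pose proof (pp2 (Cx L) Hf Hg) as Eg.
  assert (Tf := tau_comp G (f := pairing (Cx L) f g) (g := pr1 (Cx L) (cod f) (cod g)) ltac:(side)).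
  assert (Tg := tau_comp G (f := pairing (Cx L) f g) (g := pr2 (Cx L) (cod f) (cod g)) ltac:(side)).
  cbn [fst snd lscomp] in Tf, Tg. rewrite Ef, Hh1 in Tf. rewrite Eg, Hh1 in Tg.
  assert (PE := f_equal snd (phi_iso1 G (cod f) (cod g))).
  cbn [fst snd lscomp lspair lsid] in PE.
  rewrite pr_id, dom_idm, fmor_id in PE.
  clear E1 E2 E3 E4 Ef Eg.
  revert Hh Hth Tf Tg Hh1 Hh2.
  generalize (pairing (Cx L) f g) as h.
  revert Hpsi PE.
  generalize (phiinv G (cod f) (cod g)) as psi.
  intros psi Hpsi PE h Hh Hth Tf Tg Hh1 Hh2.
  unfold Dmor, fpair, reindex, lscomp. cbn [fst snd].
  rewrite Hh1, dom_idm, fmor_id, (idl (hom_id _ _)).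
  f_equal.
  rewrite Tf, Tg.
  eapply core; eassumption.
Qed.
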